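(* For every BIMS channel with capacity $C$ and every $\rho>-1$, $$-\log F^{\rm bsc}(\rho;C)\le E_0(\rho)\le -\log F^{\rm bec}(\rho;C).$$ In particular, the cutoff rate $R_0=E_0(1)$ satisfies $$-\log\Bigl(\tfrac12\bigl(\sqrt{\varepsilon}+\sqrt{1-\varepsilon}\bigr)^2\Bigr)\le R_0\le -\log\frac{1+(1-C)}{2},\qquad \varepsilon=h^{-1}(1-C),$$ with equality on the left for the BSC and on the right for the BEC.
   Context: A BIMS (binary-input memoryless symmetric) channel is a memoryless channel with input alphabet $\{x_0,x_1\}$, finite output alphabet $\mathcal Y$ and transition probabilities $P_{Y|X}(y|x)$. It is symmetric in Gallager's sense: the columns of the $2\times|\mathcal Y|$ transition matrix (rows indexed by inputs) can be partitioned into submatrices such that, in each submatrix, every row is a permutation of every other row and every column is a permutation of every other column. Inputs are equiprobable and logarithms are base 2. The capacity $C$ is $I(X;Y)$ under equiprobable inputs. For $\rho>-1$, $$F(\rho)=\sum_{x}\tfrac12\sum_{y:\,P_{Y|X}(y|x)>0}P_{Y|X}(y|x)\left(\frac{\tfrac12\sum_{x'}P_{Y|X}(y|x')^{1/(1+\rho)}}{P_{Y|X}(y|x)^{1/(1+\rho)}}\right)^{\rho},$$ and $E_0(\rho)=-\log F(\rho)$. $h$ is the binary entropy function and $h^{-1}$ its inverse on $[0,\tfrac12]$. Define $$F^{\rm bec}(\rho;C)=1+(2^{-\rho}-1)C,$$ $$F^{\rm bsc}(\rho;C)=2^{-\rho}\bigl(\varepsilon^{1/(1+\rho)}+(1-\varepsilon)^{1/(1+\rho)}\bigr)^{1+\rho},\qquad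 \varepsilon=h^{-1}(1-C).$$ *)

(* Defs.v *)
From Stdlib Require Import Reals Lra List Permutation.
Import ListNotations.
Open Scope R_scope.

Definition log2 (x : R) : R := ln x / ln 2.

(** real power with the convention 0^b = 0 (used only for b > 0 or base > 0) *)
Definition rpow (a b : R) : R := if Rlt_dec 0 a then Rpower a b else 0.

Definition sumR (m : nat) (f : nat -> R) : R :=
  fold_right Rplus 0 (map f (seq 0 m)).

(** A channel with inputs x0 = false, x1 = true and output alphabet
    {0,...,m-1}; W x y = P_{Y|X}(y|x). *)
Definition is_channel (m : nat) (W : bool -> nat -> R) : Prop :=
  (forall x y, 0 <= W x y) /\ (forall x, sumR m (W x) = 1).

(** Gallager symmetry for a 2 x m transition matrix: the columns can be
    partitioned (class label cls) such that in each submatrix the two rows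
    are permutations of each other and every column is a permutation of
    every other column. *)
Definition gallager_symmetric (m : nat) (W : bool -> nat -> R) : Prop :=
  exists cls : nat -> nat,
    (forall c : nat,
       Permutation
         (map (W false) (filter (fun y => Nat.eqb (cls y) c) (seq 0 m)))
         (map (W true)  (filter (fun y => Nat.eqb (cls y) c) (seq 0 m)))) /\
    (forall y y', (y < m)%nat -> (y' < m)%nat -> cls y = cls y' ->
       (W false y = W false y' /\ W true y = W true y') \/
       (W false y = W true y' /\ W true y = W false y')).

Definition is_BIMS (m : nat) (W : bool -> nat -> R) : Prop :=
  is_channel m W /\ gallager_symmetric m W.

(** capacity = I(X;Y) under equiprobable inputs *)
Definition capacity (m : nat) (W : bool -> nat -> R) : R :=
  sumR 2 (fun i => let x := Nat.eqb i 1 in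
    / 2 * sumR m (fun y =>
      if Rlt_dec 0 (W x y)
      then W x y * log2 (W x y / (/ 2 * (W false y + W true y)))
      else 0)).

Definition Fg (m : nat) (W : bool -> nat -> R) (rho : R) : R :=
  sumR 2 (fun i => let x := Nat.eqb i 1 in
    / 2 * sumR m (fun y =>
      if Rlt_dec 0 (W x y)
      then W x y *
           Rpower ((/ 2 * (rpow (W false y) (/ (1 + rho))
                           + rpow (W true y) (/ (1 + rho))))
                   / rpow (W x y) (/ (1 + rho))) rho
      else 0)).

Definition E0 (m : nat) (W : bool -> nat -> R) (rho : R) : R :=
  - log2 (Fg m W rho).

(** binary entropy, with 0 log 0 = 0 *)
Definition plogp (p : R) : R := if Rlt_dec 0 p then p * log2 p else 0.
Definition hb (p : R) : R := - plogp p - plogp (1 - p).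

Definition Fbec (rho C : R) : R := 1 + (Rpower 2 (- rho) - 1) * C.

(** F^bsc(rho;C), with eps standing for h^{-1}(1-C) *)
Definition Fbsc (rho eps : R) : R :=
  Rpower 2 (- rho) *
  Rpower (rpow eps (/ (1 + rho)) + rpow (1 - eps) (/ (1 + rho))) (1 + rho).

Definition bsc (p : R) (x : bool) (y : nat) : R :=
  match y with
  | 0%nat => if x then p else 1 - p
  | 1%nat => if x then 1 - p else p
  | _ => 0
  end.

(** BEC with erasure probability e (outputs 0,1, erasure = 2) *)
Definition bec (e : R) (x : bool) (y : nat) : R :=
  match y with
  | 0%nat => if x then 0 else 1 - e
  | 1%nat => if x then 1 - e else 0
  | 2%nat => e
  | _ => 0
  end.

(* Main.v *)
Require Import Defs.
From Stdlib Require Import Reals Lra Psatz List FunctionalExtensionality.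
From Coquelicot Require Import Coquelicot.
Open Scope R_scope.

Lemma mono_deriv (f f' : R -> R) (x y : R) : x <= y ->
  (forall c, x <= c <= y -> is_derive f c (f' c)) ->
  (forall c, x < c < y -> 0 <= f' c) -> f x <= f y.
Proof.
  intros Hxy Hd Hs. destruct (Req_dec x y) as [->|Hne]; [lra|].
  destruct (MVT_cor2 f f' x y) as [c [Hc1 Hc2]]; [lra| intros; apply is_derive_Reals; auto |].
  specialize (Hs c Hc2). nra.
Qed.

Lemma smono_deriv (f f' : R -> R) (x y : R) : x < y ->
  (forall c, x <= c <= y -> is_derive f c (f' c)) ->
  (forall c, x < c < y -> 0 < f' c) -> f x < f y.
Proof.
  intros Hxy Hd Hs.
  destruct (MVT_cor2 f f' x y) as [c [Hc1 Hc2]]; [lra| intros; apply is_derive_Reals; auto |].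
  specialize (Hs c Hc2). nra.
Qed.

Lemma exp_neg x : exp (- x) = / exp x.
Proof. apply exp_Ropp. Qed.

Lemma E1 y : 0 <= y -> 2 * y <= exp y - exp (- y).
Proof.
  intro Hy.
  assert (H := mono_deriv (fun y => exp y - exp (- y) - 2 * y)
     (fun y => exp y + exp (- y) - 2) 0 y Hy).
  simpl in H. rewrite Ropp_0, exp_0 in H.
  enough (0 <= exp y - exp (-y) - 2*y) by lra.
  replace 0 with (1 - 1 - 2*0) by ring. apply H.
  - intros c _. auto_derive; auto. ring.
  - intros c _. pose proof (exp_ineq1_le c). pose proof (exp_ineq1_le (-c)). lra.
Qed.

Lemma Eb x : 0 <= x -> 2 * (1 - exp (- x)) <= x * (1 + exp (- x)).
Proof.
  intro Hx.
  assert (H := mono_deriv (fun x => x * (1 + exp (- x)) - 2 * (1 - exp (- x)))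
     (fun x => exp (-x) * (exp x - 1 - x)) 0 x Hx).
  simpl in H. rewrite Ropp_0, exp_0 in H.
  enough (0 <= x * (1 + exp (- x)) - 2 * (1 - exp (- x))) by lra.
  replace 0 with (0 * (1 + 1) - 2 * (1 - 1)) by ring. apply H.
  - intros c _. auto_derive; auto. rewrite exp_neg. field. apply Rgt_not_eq, exp_pos.
  - intros c _. pose proof (exp_ineq1_le c). pose proof (exp_pos (-c)). nra.
Qed.

Definition aa r := / (1 + r).
Definition Yf r s := exp (- r * ln 2 + (1 + r) * ln (1 + exp (2 * aa r * s)) - ln (1 + exp (2 * s))).
Definition Xf s := ln (1 + exp (2*s)) - 2*s*exp(2*s)/(1+exp(2*s)).
Definition Pf r s := exp (- r * ln 2 + r * ln (1 + exp (2 * aa r * s))).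
Definition Df r s := Pf r s * (1 - exp (-2 * (1 - aa r) * s)) / (2 * s).

Lemma opos x : 0 < 1 + exp x.
Proof. pose proof (exp_pos x); lra. Qed.

Ltac sides := repeat match goal with
  | |- _ /\ _ => split
  | |- True => exact I
  | |- 0 < 1 + exp _ => apply opos
  | |- 1 + exp _ <> 0 => apply Rgt_not_eq, opos
  end.

Lemma Xf_deriv s : is_derive Xf s (- 4 * s * exp (2*s) / (1 + exp (2*s))^2).
Proof.
  unfold Xf. auto_derive; sides.
  pose proof (opos (2*s)). field. lra.
Qed.

Lemma Yf_deriv r s : -1 < r -> is_derive (Yf r) s
   (Yf r s * (2 * exp (2 * aa r * s) / (1 + exp (2 * aa r * s)) - 2 * exp (2*s) / (1 + exp (2*s)))).
Proof.
  intro Hr. unfold Yf. auto_derive; sides.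
  replace (- r * ln 2 + (1 + r) * ln (1 + exp (2 * aa r * s)) + - ln (1 + exp (2 * s)))
  with (- r * ln 2 + (1 + r) * ln (1 + exp (2 * aa r * s)) - ln (1 + exp (2 * s))) by ring.
  pose proof (opos (2*s)). pose proof (opos (2 * aa r * s)).
  set (E := exp (_ - _)). set (W := exp (2 * aa r * s)) in *. set (w := exp (2 * s)) in *.
  unfold aa. field. lra.
Qed.

Lemma Pf_deriv r s : -1 < r -> is_derive (Pf r) s
   (Pf r s * (2 * (1 - aa r) * exp (2 * aa r * s) / (1 + exp (2 * aa r * s)))).
Proof.
  intro Hr. unfold Pf. auto_derive; sides.
  pose proof (opos (2 * aa r * s)).
  set (E := exp (_ + _)). set (W := exp (2 * aa r * s)) in *.
  unfold aa. field. lra.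
Qed.

Lemma Yf_eq r s : -1 < r -> Yf r s = Pf r s * (1 + exp (2 * aa r * s)) / (1 + exp (2 * s)).
Proof.
  intro Hr. unfold Yf, Pf.
  replace (- r * ln 2 + (1 + r) * ln (1 + exp (2 * aa r * s)) - ln (1 + exp (2 * s)))
    with ((- r * ln 2 + r * ln (1 + exp (2 * aa r * s))) + (ln (1 + exp (2 * aa r * s)) + - ln (1 + exp (2 * s)))) by ring.
  set (A := - r * ln 2 + r * ln (1 + exp (2 * aa r * s))).
  rewrite exp_plus. rewrite (exp_plus (ln _)), exp_ln by apply opos. rewrite exp_Ropp, exp_ln by apply opos.
  field. apply Rgt_not_eq, opos.
Qed.

Lemma W_eq r s : exp (2 * aa r * s) = exp (2 * s) * exp (-2 * (1 - aa r) * s).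
Proof. rewrite <- exp_plus. f_equal. ring. Qed.

Lemma YXD r s : -1 < r -> s <> 0 ->
  Yf r s * (2 * exp (2 * aa r * s) / (1 + exp (2 * aa r * s)) - 2 * exp (2*s) / (1 + exp (2*s)))
  = (- 4 * s * exp (2*s) / (1 + exp (2*s))^2) * Df r s.
Proof.
  intros Hr Hs. rewrite Yf_eq by auto. unfold Df.
  pose proof (opos (2*s)). pose proof (opos (2 * aa r * s)).
  rewrite (W_eq r s). field. rewrite <- W_eq. repeat split; lra.
Qed.

Lemma exp_le_exp x y : x <= y -> exp x <= exp y.
Proof. intro H. destruct H. left; apply exp_increasing; auto. subst; lra. Qed.

Definition T2 r s :=
  let x := 2 * (1 - aa r) * s in let z := exp (- x) in let W := exp (2 * aa r * s) in
  x * (W / (1 + W)) * (1 - z) + x * z - (1 - z).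

Lemma Df_deriv r s : -1 < r -> s <> 0 -> is_derive (Df r) s (Pf r s / (2 * s^2) * T2 r s).
Proof.
  intros Hr Hs. unfold Df, T2, Pf. auto_derive.
  - sides; lra.
  - pose proof (opos (2 * aa r * s)).
    replace (- (2 * (1 - aa r) * s)) with (-2 * (1 - aa r) * s) by ring.
    set (E := exp (_ + _)). set (W := exp (2 * aa r * s)) in *. set (z := exp (-2 * (1 - aa r) * s)).
    unfold aa in *. field. lra.
Qed.

Lemma aa_pos r : -1 < r -> 0 < aa r.
Proof. intro. unfold aa. apply Rinv_0_lt_compat. lra. Qed.

Lemma T2_nonneg r s : -1 < r -> 0 < s -> 0 <= T2 r s.
Proof.
  intros Hr Hs. unfold T2. cbv zeta.
  pose proof (aa_pos r Hr) as Ha.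
  set (b := 1 - aa r).
  set (W := exp (2 * aa r * s)). set (x := 2 * b * s). set (z := exp (- x)).
  assert (HW : 0 < W) by apply exp_pos. assert (Hz : 0 < z) by apply exp_pos.
  destruct (Rtotal_order b 0) as [Hb|[Hb|Hb]].
  -
    assert (Hx : x < 0) by (unfold x; nra).
    assert (Hzw : z <= W). { unfold z, W. apply exp_le_exp. unfold x, b in *. nra. }
    assert (Hz1 : 1 < z). { unfold z. rewrite <- exp_0. apply exp_increasing. lra. }
    assert (Hfr : z / (1 + z) <= W / (1 + W)).
    { apply (Rmult_le_reg_r ((1+z)*(1+W))). nra. field_simplify; nra. }
    pose proof (E1 (- x) ltac:(lra)) as HE. fold z in HE. rewrite Ropp_involutive in HE.
    replace (exp x) with (/ z) in HE by (unfold z; rewrite exp_Ropp, Rinv_inv; auto).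
    assert (Hk : 2 * (- x) * z <= z * z - 1).
    { apply (Rmult_le_compat_l z) in HE; [|lra]. rewrite Rmult_minus_distr_l, Rinv_r in HE; lra. }
    assert (x * (z / (1 + z)) * (1 - z) + x * z - (1 - z) = (2 * x * z + z * z - 1) / (1 + z)) by (field; lra).
    assert (0 <= (2 * x * z + z * z - 1) / (1 + z)) by (apply Rdiv_le_0_compat; lra).
    assert (x * (z / (1 + z)) * (1 - z) <= x * (W / (1 + W)) * (1 - z)).
    { assert (0 < x * (1 - z)) by nra.
      replace (x * (z / (1 + z)) * (1 - z)) with ((z / (1 + z)) * (x * (1 - z))) by ring.
      replace (x * (W / (1 + W)) * (1 - z)) with ((W / (1 + W)) * (x * (1 - z))) by ring.
      apply Rmult_le_compat_r; lra. }
    lra.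
  - assert (x = 0) by (unfold x; rewrite Hb; ring). unfold z. rewrite H, Ropp_0, exp_0. lra.
  - assert (Hx : 0 < x) by (unfold x; nra).
    assert (HW1 : 1 <= W). { unfold W. rewrite <- exp_0. apply exp_le_exp. nra. }
    assert (Hz1 : z < 1). { unfold z. rewrite <- exp_0. apply exp_increasing. lra. }
    assert (Hfr : / 2 <= W / (1 + W)).
    { apply (Rmult_le_reg_r (2*(1+W))). nra. field_simplify; nra. }
    pose proof (Eb x ltac:(lra)) as HE. fold z in HE.
    assert (x * (/2) * (1 - z) <= x * (W / (1 + W)) * (1 - z)).
    { apply Rmult_le_compat_r; [lra|]. apply Rmult_le_compat_l; lra. }
    lra.
Qed.

Lemma Pf_pos r s : 0 < Pf r s.
Proof. apply exp_pos. Qed.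

Lemma Df_mono r s1 s2 : -1 < r -> 0 < s1 -> s1 <= s2 -> Df r s1 <= Df r s2.
Proof.
  intros Hr H1 H2.
  apply (mono_deriv (Df r) (fun s => Pf r s / (2 * s^2) * T2 r s)); auto.
  - intros c Hc. apply Df_deriv; auto. lra.
  - intros c Hc. apply Rmult_le_pos; [|apply T2_nonneg; lra].
    apply Rdiv_le_0_compat. left; apply Pf_pos. nra.
Qed.

Definition Xd s := - 4 * s * exp (2*s) / (1 + exp (2*s))^2.
Definition Yd r s := Yf r s * (2 * exp (2 * aa r * s) / (1 + exp (2 * aa r * s)) - 2 * exp (2*s) / (1 + exp (2*s))).

Lemma Xd_neg s : 0 < s -> Xd s < 0.
Proof.
  intro. unfold Xd. pose proof (exp_pos (2*s)). pose proof (opos (2*s)).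
  assert (0 < 4 * s * exp (2*s) / (1 + exp (2*s))^2).
  { apply Rdiv_lt_0_compat; [nra|]. apply pow_lt; lra. }
  unfold Rdiv in *. lra.
Qed.

Lemma der_opp f c l : is_derive f c l -> is_derive (fun t => - f t) c (- l).
Proof. intro H. apply is_derive_Reals. apply is_derive_Reals in H. exact (derivable_pt_lim_opp f c l H). Qed.

Lemma tangent_s r s0 s : -1 < r -> 0 < s0 -> 0 <= s ->
  Yf r s - Df r s0 * Xf s <= Yf r s0 - Df r s0 * Xf s0.
Proof.
  intros Hr H0 Hs.
  set (D0 := Df r s0).
  assert (Hder : forall c, is_derive (fun t => Yf r t - D0 * Xf t) c (Yd r c - D0 * Xd c)).
  { intro c. apply (is_derive_minus (Yf r) (fun t => D0 * Xf t)).
    - apply Yf_deriv; auto.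
    - apply (is_derive_scal (fun t => Xf t)). apply Xf_deriv. }
  assert (Hsg : forall c, 0 < c -> Yd r c - D0 * Xd c = Xd c * (Df r c - D0)).
  { intros c Hc. unfold Yd, Xd. rewrite YXD by lra. ring. }
  destruct (Rle_or_lt s s0) as [Hle|Hlt].
  - apply (mono_deriv (fun t => Yf r t - D0 * Xf t) (fun c => Yd r c - D0 * Xd c)); auto.
    intros c Hc. rewrite Hsg by lra.
    pose proof (Xd_neg c ltac:(lra)). pose proof (Df_mono r c s0 Hr ltac:(lra) ltac:(lra)).
    fold D0 in H1. nra.
  - enough (- (Yf r s0 - D0 * Xf s0) <= - (Yf r s - D0 * Xf s)) by lra.
    apply (mono_deriv (fun t => - (Yf r t - D0 * Xf t)) (fun c => - (Yd r c - D0 * Xd c))).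
    + lra.
    + intros c _. apply der_opp. apply Hder.
    + intros c Hc. rewrite Hsg by lra.
      pose proof (Xd_neg c ltac:(lra)). pose proof (Df_mono r s0 c Hr ltac:(lra) ltac:(lra)).
      fold D0 in H1. nra.
Qed.

Lemma Xf_strict s1 s2 : 0 <= s1 < s2 -> Xf s2 < Xf s1.
Proof.
  intro H. enough (- Xf s1 < - Xf s2) by lra.
  apply (smono_deriv (fun t => - Xf t) (fun t => - Xd t)); [lra| |].
  - intros c _. apply der_opp, Xf_deriv.
  - intros c Hc. pose proof (Xd_neg c ltac:(lra)). lra.
Qed.

Definition sof p := ln ((1 - p) / p) / 2.

Lemma ln_divp x y : 0 < x -> 0 < y -> ln (x / y) = ln x - ln y.
Proof. intros. unfold Rdiv. rewrite ln_mult, ln_Rinv; try lra. apply Rinv_0_lt_compat; lra. Qed.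

Lemma rpow_pos x a : 0 < x -> rpow x a = exp (a * ln x).
Proof. intro. unfold rpow. destruct (Rlt_dec 0 x); [reflexivity|lra]. Qed.

Lemma exp_2sof p : 0 < p < 1 -> exp (2 * sof p) = (1 - p) / p.
Proof.
  intro. unfold sof. replace (2 * (ln ((1 - p) / p) / 2)) with (ln ((1 - p) / p)) by field.
  apply exp_ln. apply Rdiv_lt_0_compat; lra.
Qed.

Lemma Fbsc_Yf r p : -1 < r -> 0 < p < 1 -> Fbsc r p = Yf r (sof p).
Proof.
  intros Hr Hp. unfold Fbsc, Yf, Rpower.
  rewrite !rpow_pos by lra. rewrite <- exp_plus. f_equal.
  rewrite exp_2sof by auto.
  replace (1 + (1 - p) / p) with (/ p) by (field; lra). rewrite ln_Rinv by lra.
  replace (2 * aa r * sof p) with (aa r * (ln (1 - p) - ln p)).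
  2:{ unfold sof. rewrite ln_divp by lra. field. }
  replace (exp (/ (1 + r) * ln p) + exp (/ (1 + r) * ln (1 - p)))
    with (exp (aa r * ln p) * (1 + exp (aa r * (ln (1 - p) - ln p)))).
  2:{ unfold aa. rewrite Rmult_plus_distr_l, Rmult_1_r, <- exp_plus. f_equal. f_equal. ring. }
  rewrite ln_mult by (apply exp_pos || apply opos). rewrite ln_exp.
  unfold aa. field. lra.
Qed.

Lemma hb_Xf p : 0 < p < 1 -> hb p = Xf (sof p) / ln 2.
Proof.
  intro Hp. unfold hb, plogp, Xf, log2.
  destruct (Rlt_dec 0 p); [|lra]. destruct (Rlt_dec 0 (1 - p)); [|lra].
  rewrite exp_2sof by auto.
  replace (1 + (1 - p) / p) with (/ p) by (field; lra). rewrite ln_Rinv by lra.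
  unfold sof. rewrite ln_divp by lra.
  pose proof ln_lt_2. field. split; lra.
Qed.

Lemma sof_nonneg p : 0 < p <= / 2 -> 0 <= sof p.
Proof.
  intro. unfold sof. apply Rmult_le_pos; [|lra]. rewrite <- ln_1.
  destruct (Req_dec p (/2)). { subst. right. f_equal. field. }
  left. apply ln_increasing; [lra|]. apply (Rmult_lt_reg_r p); [lra|]. field_simplify; lra.
Qed.

Lemma sof_pos p : 0 < p < / 2 -> 0 < sof p.
Proof.
  intro. unfold sof. apply Rmult_lt_0_compat; [|lra]. rewrite <- ln_1.
  apply ln_increasing; [lra|]. apply (Rmult_lt_reg_r p); [lra|]. field_simplify; lra.
Qed.

Lemma cont_from_deriv f x l : is_derive f x l -> continuity_pt f x.
Proof. intro H. apply derivable_continuous_pt. exists l. apply is_derive_Reals. exact H. Qed.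

Lemma rpow_cont0 a : 0 < a -> continuity_pt (fun x => rpow x a) 0.
Proof.
  intro Ha. unfold continuity_pt, continue_in, limit1_in, limit_in. intros e He.
  exists (exp (/ a * ln e)). split; [apply exp_pos|].
  intros x [_ Hx]. simpl in *. unfold R_dist in *.
  unfold rpow at 2. destruct (Rlt_dec 0 0); [lra|].
  unfold rpow. destruct (Rlt_dec 0 x) as [Hp|Hp].
  - rewrite Rminus_0_r, Rabs_right by (left; apply exp_pos).
    rewrite Rminus_0_r, Rabs_right in Hx by lra.
    replace e with (exp (a * ln (exp (/ a * ln e)))).
    2:{ rewrite ln_exp. replace (a * (/ a * ln e)) with (ln e) by (field; lra). apply exp_ln; auto. }
    apply exp_increasing. apply Rmult_lt_compat_l; auto. apply ln_increasing; auto.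
  - rewrite Rminus_0_r, Rabs_R0. auto.
Qed.

Lemma rpow_contp a x : 0 < x -> continuity_pt (fun y => rpow y a) x.
Proof.
  intro Hx. apply (continuity_pt_ext_loc (fun y => exp (a * ln y))).
  - exists (mkposreal x Hx). intros y Hy. unfold ball in Hy; simpl in Hy. unfold AbsRing_ball, abs, minus, plus, opp in Hy; simpl in Hy.
    unfold rpow. destruct (Rlt_dec 0 y) as [H|H]; auto.
    exfalso. apply Rabs_def2 in Hy. lra.
  - apply (cont_from_deriv _ _ (a * (1 * / x) * exp (a * ln x))). auto_derive; auto.
Qed.

Lemma plogp_cont0 : continuity_pt plogp 0.
Proof.
  unfold continuity_pt, continue_in, limit1_in, limit_in. intros e He.
  pose proof ln_lt_2 as Hl2.
  set (k := e * ln 2 / 2). assert (Hk : 0 < k) by (unfold k; nra).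
  exists (Rmin 1 (k * k)). split; [apply Rmin_glb_lt; nra|].
  intros x [_ Hx]. simpl in *. unfold R_dist in *.
  unfold plogp at 2. destruct (Rlt_dec 0 0); [lra|].
  unfold plogp. destruct (Rlt_dec 0 x) as [Hp|Hp].
  - rewrite Rminus_0_r in *. rewrite Rabs_right in Hx by lra.
    assert (Hx1 : x < 1) by (eapply Rlt_le_trans; [apply Hx| apply Rmin_l]).
    assert (Hxk : x < k * k) by (eapply Rlt_le_trans; [apply Hx| apply Rmin_r]).
    assert (Hln : ln x < 0) by (rewrite <- ln_1; apply ln_increasing; lra).
    set (t := - ln x / 2).
    pose proof (exp_ineq1_le t) as Ht.
    assert (Ht2 : exp t * exp t = / x).
    { rewrite <- exp_plus. replace (t + t) with (- ln x) by (unfold t; field).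
      rewrite exp_Ropp, exp_ln; auto. }
    set (u := x * exp t).
    assert (Hu2 : u * u = x) by (unfold u; replace (x * exp t * (x * exp t)) with (x * x * (exp t * exp t)) by ring; rewrite Ht2; field; lra).
    assert (Hu : 0 < u) by (unfold u; pose proof (exp_pos t); nra).
    assert (Huk : u < k) by nra.
    assert (Hb : - (x * ln x) <= 2 * u) by (unfold u, t in *; nra).
    unfold log2. assert (Hi : 0 < / ln 2) by (apply Rinv_0_lt_compat; lra).
    rewrite Rabs_left.
    + replace (- (x * (ln x / ln 2))) with (- (x * ln x) * / ln 2) by (field; lra).
      apply (Rmult_lt_reg_r (ln 2)); [lra|]. rewrite Rmult_assoc, Rinv_l by lra.
      unfold k in Huk. nra.
    + unfold Rdiv. assert (ln x * / ln 2 < 0) by nra. nra.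
  - rewrite Rminus_0_r, Rabs_R0. lra.
Qed.

Lemma plogp_contp x : 0 < x -> continuity_pt plogp x.
Proof.
  intro Hx. apply (continuity_pt_ext_loc (fun y => y * (ln y / ln 2))).
  - exists (mkposreal x Hx). intros y Hy. unfold ball in Hy; simpl in Hy. unfold AbsRing_ball, abs, minus, plus, opp in Hy; simpl in Hy.
    unfold plogp, log2. destruct (Rlt_dec 0 y) as [H|H]; auto.
    exfalso. apply Rabs_def2 in Hy. lra.
  - pose proof ln_lt_2.
    apply (cont_from_deriv _ _ ((ln x + 1) / ln 2)). auto_derive.
    + repeat split; lra.
    + field. lra.
Qed.

Lemma cplus f g x : continuity_pt f x -> continuity_pt g x -> continuity_pt (fun y => f y + g y) x.
Proof. apply continuity_pt_plus. Qed.
Lemma cminus f g x : continuity_pt f x -> continuity_pt g x -> continuity_pt (fun y => f y - g y) x.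
Proof. apply continuity_pt_minus. Qed.
Lemma cmult f g x : continuity_pt f x -> continuity_pt g x -> continuity_pt (fun y => f y * g y) x.
Proof. apply continuity_pt_mult. Qed.
Lemma cconst c x : continuity_pt (fun _ => c) x.
Proof. apply continuity_pt_const. intros a b; reflexivity. Qed.
Lemma ccomp f g x : continuity_pt g x -> continuity_pt f (g x) -> continuity_pt (fun y => f (g y)) x.
Proof. apply (continuity_pt_comp g f). Qed.
Lemma c1m x : continuity_pt (fun y => 1 - y) x.
Proof. apply (cont_from_deriv _ _ (-1)). auto_derive; auto. Qed.

Lemma Fbsc_cont0 r : -1 < r -> continuity_pt (fun p => Fbsc r p) 0.
Proof.
  intro Hr. unfold Fbsc. apply cmult; [apply cconst|].
  apply (ccomp (fun y => Rpower y (1 + r)) (fun p => rpow p (/ (1 + r)) + rpow (1 - p) (/ (1 + r)))).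
  - apply cplus.
    + apply rpow_cont0. apply Rinv_0_lt_compat; lra.
    + apply (ccomp (fun y => rpow y (/ (1 + r))) (fun y => 1 - y)); [apply c1m|].
      apply rpow_contp. lra.
  - assert (E : rpow 0 (/ (1 + r)) + rpow (1 - 0) (/ (1 + r)) = 1).
    { unfold rpow. destruct (Rlt_dec 0 0); [lra|]. destruct (Rlt_dec 0 (1 - 0)); [|lra].
      rewrite Rminus_0_r. unfold Rpower. rewrite ln_1, Rmult_0_r, exp_0. ring. }
    rewrite E. unfold Rpower. apply (cont_from_deriv _ _ ((1 + r) * (1 * / 1) * exp ((1 + r) * ln 1))).
    auto_derive; auto. lra.
Qed.

Lemma hb_cont0 : continuity_pt hb 0.
Proof.
  unfold hb. apply cminus.
  - apply (continuity_pt_opp plogp). apply plogp_cont0.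
  - apply (ccomp plogp (fun y => 1 - y)); [apply c1m|]. apply plogp_contp. lra.
Qed.

Lemma Fbsc_sym r p : Fbsc r (1 - p) = Fbsc r p.
Proof. unfold Fbsc. replace (1 - (1 - p)) with p by ring. rewrite (Rplus_comm (rpow p _)). reflexivity. Qed.

Lemma hb_sym p : hb (1 - p) = hb p.
Proof. unfold hb. replace (1 - (1 - p)) with p by ring. ring. Qed.

Lemma hb0 : hb 0 = 0.
Proof. unfold hb, plogp. destruct (Rlt_dec 0 0); [lra|]. destruct (Rlt_dec 0 (1-0)); [|lra].
  rewrite Rminus_0_r. unfold log2. rewrite ln_1. field. pose proof ln_lt_2. lra. Qed.

Lemma Fbsc0 r : -1 < r -> Fbsc r 0 = Rpower 2 (- r).
Proof. intro. unfold Fbsc, rpow. destruct (Rlt_dec 0 0); [lra|]. destruct (Rlt_dec 0 (1-0)); [|lra].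
  rewrite Rminus_0_r. unfold Rpower. rewrite ln_1, !Rmult_0_r, exp_0, Rplus_0_l, ln_1, Rmult_0_r, exp_0. ring. Qed.

Definition mu r eps := - Df r (sof eps) * ln 2.

Lemma tangent_mid r eps p : -1 < r -> 0 < eps < / 2 -> 0 < p <= / 2 ->
  Fbsc r p + mu r eps * hb p <= Fbsc r eps + mu r eps * hb eps.
Proof.
  intros Hr He Hp. unfold mu.
  rewrite !Fbsc_Yf, !hb_Xf by (auto; lra).
  pose proof ln_lt_2.
  replace (- Df r (sof eps) * ln 2 * (Xf (sof p) / ln 2)) with (- (Df r (sof eps) * Xf (sof p))) by (field; lra).
  replace (- Df r (sof eps) * ln 2 * (Xf (sof eps) / ln 2)) with (- (Df r (sof eps) * Xf (sof eps))) by (field; lra).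
  pose proof (tangent_s r (sof eps) (sof p) Hr (sof_pos eps He) (sof_nonneg p Hp)). lra.
Qed.

Lemma tangent_p r eps p : -1 < r -> 0 < eps < / 2 -> 0 <= p <= 1 ->
  Fbsc r p + mu r eps * hb p <= Fbsc r eps + mu r eps * hb eps.
Proof.
  intros Hr He Hp.
  assert (Hlow : forall q, 0 <= q <= / 2 -> Fbsc r q + mu r eps * hb q <= Fbsc r eps + mu r eps * hb eps).
  { intros q Hq. destruct (Req_dec q 0) as [->|Hq0]; [|apply tangent_mid; auto; lra].
    set (M := Fbsc r eps + mu r eps * hb eps).
    apply Rnot_lt_le. intro Hc.
    assert (Hcont : continuity_pt (fun q => Fbsc r q + mu r eps * hb q) 0).
    { apply cplus. apply Fbsc_cont0; auto. apply cmult. apply cconst. apply hb_cont0. }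
    unfold continuity_pt, continue_in, limit1_in, limit_in in Hcont.
    destruct (Hcont (Fbsc r 0 + mu r eps * hb 0 - M)) as [d [Hd Hd2]]; [lra|].
    set (q := Rmin (d / 2) eps).
    assert (Hq1 : 0 < q) by (apply Rmin_glb_lt; lra).
    assert (Hq2 : q <= eps) by apply Rmin_r.
    assert (Hq3 : q <= d / 2) by apply Rmin_l.
    specialize (Hd2 q). simpl in Hd2. unfold R_dist in Hd2.
    assert (Hm := tangent_mid r eps q Hr He ltac:(lra)). fold M in Hm.
    assert (Hin : D_x no_cond 0 q /\ Rabs (q - 0) < d).
    { split. split. exact I. lra. rewrite Rminus_0_r, Rabs_right; lra. }
    specialize (Hd2 Hin). apply Rabs_def2 in Hd2. lra. }
  destruct (Rle_or_lt p (/ 2)) as [H|H].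
  - apply Hlow. lra.
  - rewrite <- Fbsc_sym, <- hb_sym. apply Hlow. lra.
Qed.

Lemma sof_half : sof (/ 2) = 0.
Proof. unfold sof. replace ((1 - / 2) / / 2) with 1 by field. rewrite ln_1. field. Qed.

Lemma Xf0 : Xf 0 = ln 2.
Proof. unfold Xf. rewrite Rmult_0_r, exp_0. replace (1 + 1) with 2 by ring. field. Qed.

Lemma hb_half : hb (/ 2) = 1.
Proof. rewrite hb_Xf by lra. rewrite sof_half, Xf0. field. pose proof ln_lt_2. lra. Qed.

Lemma Fbsc_half r : -1 < r -> Fbsc r (/ 2) = 1.
Proof.
  intro Hr. rewrite Fbsc_Yf by (auto; lra). rewrite sof_half. unfold Yf.
  rewrite !Rmult_0_r, exp_0. replace (1 + 1) with 2 by ring.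
  replace (- r * ln 2 + (1 + r) * ln 2 - ln 2) with 0 by ring. apply exp_0.
Qed.

Lemma hb_pos p : 0 < p < 1 -> 0 < hb p.
Proof.
  intro Hp. unfold hb, plogp, log2.
  destruct (Rlt_dec 0 p); [|lra]. destruct (Rlt_dec 0 (1 - p)); [|lra].
  assert (ln p < 0) by (rewrite <- ln_1; apply ln_increasing; lra).
  assert (ln (1 - p) < 0) by (rewrite <- ln_1; apply ln_increasing; lra).
  pose proof ln_lt_2. assert (0 < / ln 2) by (apply Rinv_0_lt_compat; lra).
  unfold Rdiv. assert (ln p * / ln 2 < 0) by nra. assert (ln (1-p) * / ln 2 < 0) by nra. nra.
Qed.

Lemma sof_strict p q : 0 < p < q -> q < 1 -> sof q < sof p.
Proof.
  intros H Hq. unfold sof. apply Rmult_lt_compat_r; [lra|].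
  apply ln_increasing. apply Rdiv_lt_0_compat; lra.
  apply (Rmult_lt_reg_r (p * q)); [nra|]. field_simplify; nra.
Qed.

Lemma hb_strict p q : 0 <= p < q -> q <= / 2 -> hb p < hb q.
Proof.
  intros H Hq. destruct (Req_dec p 0) as [->|Hp0].
  - rewrite hb0. apply hb_pos. lra.
  - rewrite !hb_Xf by lra. pose proof ln_lt_2.
    apply Rmult_lt_compat_r; [apply Rinv_0_lt_compat; lra|].
    apply Xf_strict. split; [apply sof_nonneg; lra|]. apply sof_strict; lra.
Qed.

Lemma hb_le1 p : 0 <= p <= 1 -> hb p <= 1.
Proof.
  intro H. destruct (Rtotal_order p (/2)) as [L|[L|L]].
  - assert (hb p < hb (/2)) by (apply hb_strict; lra). rewrite hb_half in H0. lra.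
  - subst. rewrite hb_half; lra.
  - rewrite <- hb_sym. assert (hb (1 - p) < hb (/2)) by (apply hb_strict; lra). rewrite hb_half in H0. lra.
Qed.

Lemma hb_ge0 p : 0 <= p <= 1 -> 0 <= hb p.
Proof.
  intro H. destruct (Req_dec p 0) as [->|]; [rewrite hb0; lra|].
  destruct (Req_dec p 1) as [->|]. { replace 1 with (1 - 0) by ring. rewrite hb_sym, hb0; lra. }
  left. apply hb_pos. lra.
Qed.

Lemma hb_eq1 p : 0 <= p <= 1 -> hb p = 1 -> p = / 2.
Proof.
  intros H E. destruct (Rtotal_order p (/2)) as [L|[L|L]]; auto.
  - pose proof (hb_strict p (/2) ltac:(lra) ltac:(lra)). rewrite hb_half in H0. lra.
  - rewrite <- hb_sym in E. pose proof (hb_strict (1 - p) (/2) ltac:(lra) ltac:(lra)). rewrite hb_half in H0. lra.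
Qed.

Lemma hb_eq0 p : 0 <= p <= 1 -> hb p = 0 -> p = 0 \/ p = 1.
Proof.
  intros H E. destruct (Req_dec p 0); auto. destruct (Req_dec p 1); auto.
  pose proof (hb_pos p ltac:(lra)). lra.
Qed.

Lemma Fbsc1 r : -1 < r -> Fbsc r 1 = Rpower 2 (- r).
Proof. intro. replace 1 with (1 - 0) by ring. rewrite Fbsc_sym. apply Fbsc0; auto. Qed.

Lemma hb1 : hb 1 = 0.
Proof. replace 1 with (1 - 0) by ring. rewrite hb_sym. apply hb0. Qed.

Lemma chord r p : -1 < r -> 0 <= p <= 1 ->
  1 + (Rpower 2 (- r) - 1) * (1 - hb p) <= Fbsc r p.
Proof.
  intros Hr Hp.
  assert (Hl : forall q, 0 <= q <= / 2 -> 1 + (Rpower 2 (- r) - 1) * (1 - hb q) <= Fbsc r q).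
  { intros q Hq.
    destruct (Req_dec q 0) as [->|Hq0]. { rewrite hb0, Fbsc0; auto. lra. }
    destruct (Req_dec q (/2)) as [->|Hq1]. { rewrite hb_half, Fbsc_half; auto. lra. }
    assert (Hq' : 0 < q < / 2) by (destruct Hq as [[|] [|]]; subst; try lra; tauto).
    pose proof (tangent_p r q 0 Hr ltac:(lra) ltac:(lra)) as T0.
    pose proof (tangent_p r q (/2) Hr ltac:(lra) ltac:(lra)) as T1.
    rewrite hb0, Fbsc0 in T0 by auto. rewrite hb_half, Fbsc_half in T1 by auto.
    pose proof (hb_ge0 q ltac:(lra)). pose proof (hb_le1 q ltac:(lra)).
    set (h := hb q) in *. set (m := mu r q) in *.
    assert (E : (1 - h) * (Rpower 2 (-r) + m * 0) + h * (1 + m * 1) <= (1 - h) * (Fbsc r q + m * h) + h * (Fbsc r q + m * h)).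
    { apply Rplus_le_compat; apply Rmult_le_compat_l; lra. }
    nra. }
  destruct (Rle_or_lt p (/2)). apply Hl; lra.
  rewrite <- Fbsc_sym, <- hb_sym. apply Hl. lra.
Qed.

Definition Fterm r u v :=
  / 2 * (if Rlt_dec 0 u then u * Rpower ((/ 2 * (rpow u (/ (1 + r)) + rpow v (/ (1 + r)))) / rpow u (/ (1 + r))) r else 0) +
  / 2 * (if Rlt_dec 0 v then v * Rpower ((/ 2 * (rpow u (/ (1 + r)) + rpow v (/ (1 + r)))) / rpow v (/ (1 + r))) r else 0).

Definition Cterm u v :=
  / 2 * (if Rlt_dec 0 u then u * log2 (u / (/ 2 * (u + v))) else 0) +
  / 2 * (if Rlt_dec 0 v then v * log2 (v / (/ 2 * (u + v))) else 0).

Lemma mul_exp x y : 0 < x -> x * exp y = exp (ln x + y).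
Proof. intro. rewrite exp_plus, exp_ln; auto. Qed.

Lemma rpow0 a : rpow 0 a = 0.
Proof. unfold rpow. destruct (Rlt_dec 0 0); [lra|auto]. Qed.

Lemma key_term r u S : -1 < r -> 0 < u -> 0 < S ->
  u * Rpower (/ 2 * S / exp (/ (1 + r) * ln u)) r = exp (/ (1 + r) * ln u) * exp (r * (ln S - ln 2)).
Proof.
  intros Hr Hu HS. unfold Rpower.
  rewrite ln_divp by (apply exp_pos || lra). rewrite ln_exp, ln_mult, ln_Rinv by lra.
  rewrite mul_exp by auto. rewrite <- exp_plus. f_equal. field. lra.
Qed.

Lemma Fterm_eq r u v : -1 < r -> 0 <= u -> 0 <= v -> 0 < u + v ->
  Fterm r u v = (u + v) / 2 * Fbsc r (u / (u + v)).
Proof.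
  intros Hr Hu Hv Huv. unfold Fterm, Fbsc.
  replace (1 - u / (u + v)) with (v / (u + v)) by (field; lra).
  set (a := / (1 + r)).
  assert (Ha : 0 < a) by (apply Rinv_0_lt_compat; lra).
  destruct (Rlt_dec 0 u) as [Pu|Pu]; destruct (Rlt_dec 0 v) as [Pv|Pv].
  - rewrite !rpow_pos by (auto; apply Rdiv_lt_0_compat; lra).
    set (S := exp (a * ln u) + exp (a * ln v)).
    assert (HS : 0 < S) by (unfold S; pose proof (exp_pos (a * ln u)); pose proof (exp_pos (a * ln v)); lra).
    unfold a. rewrite !key_term by auto. fold a.
    rewrite !ln_divp by lra.
    replace (exp (a * (ln u - ln (u + v))) + exp (a * (ln v - ln (u + v)))) with (S * exp (- (a * ln (u + v)))).
    2:{ unfold S. rewrite Rmult_plus_distr_r, <- !exp_plus. f_equal; f_equal; ring. }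
    unfold Rpower. rewrite ln_mult, ln_exp by (auto; apply exp_pos).
    transitivity (/ 2 * exp (- r * ln 2 + (1 + r) * ln S)).
    + replace (/ 2 * (exp (a * ln u) * exp (r * (ln S - ln 2))) + / 2 * (exp (a * ln v) * exp (r * (ln S - ln 2))))
        with (/ 2 * (S * exp (r * (ln S - ln 2)))) by (unfold S; ring).
      rewrite (mul_exp S) by auto. f_equal. f_equal. ring.
    + rewrite <- exp_plus.
      replace ((u + v) / 2) with (/ 2 * (u + v)) by field. rewrite Rmult_assoc, (mul_exp (u + v)) by lra.
      f_equal. f_equal. unfold a. field. lra.
  - assert (v = 0) by lra. subst v. rewrite Rplus_0_r, rpow0, Rplus_0_r, Rmult_0_r, Rplus_0_r.
    replace (u / u) with 1 by (field; lra). replace (0 / u) with 0 by (field; lra). rewrite rpow0, Rplus_0_r.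
    rewrite !rpow_pos by lra.
    unfold Rpower. rewrite ln_1, Rmult_0_r, exp_0. rewrite ln_1, Rmult_0_r, exp_0.
    replace (/ 2 * exp (a * ln u) / exp (a * ln u)) with (/ 2) by (field; apply Rgt_not_eq, exp_pos).
    rewrite ln_Rinv by lra. replace (r * - ln 2) with (- r * ln 2) by ring. field.
  - assert (u = 0) by lra. subst u. rewrite Rplus_0_l, rpow0, Rplus_0_l, Rmult_0_r, Rplus_0_l.
    replace (v / v) with 1 by (field; lra). replace (0 / v) with 0 by (field; lra). rewrite rpow0, Rplus_0_l.
    rewrite !rpow_pos by lra.
    unfold Rpower. rewrite ln_1, Rmult_0_r, exp_0. rewrite ln_1, Rmult_0_r, exp_0.
    replace (/ 2 * exp (a * ln v) / exp (a * ln v)) with (/ 2) by (field; apply Rgt_not_eq, exp_pos).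
    rewrite ln_Rinv by lra. replace (r * - ln 2) with (- r * ln 2) by ring. field.
  - lra.
Qed.

Lemma Cterm_eq u v : 0 <= u -> 0 <= v -> 0 < u + v ->
  Cterm u v = (u + v) / 2 * (1 - hb (u / (u + v))).
Proof.
  intros Hu Hv Huv. unfold Cterm, hb, plogp.
  replace (1 - u / (u + v)) with (v / (u + v)) by (field; lra).
  pose proof ln_lt_2 as L2.
  destruct (Rlt_dec 0 u) as [Pu|Pu]; destruct (Rlt_dec 0 v) as [Pv|Pv].
  - destruct (Rlt_dec 0 (u / (u + v))) as [_|N]; [|exfalso; apply N; apply Rdiv_lt_0_compat; lra].
    destruct (Rlt_dec 0 (v / (u + v))) as [_|N]; [|exfalso; apply N; apply Rdiv_lt_0_compat; lra].
    unfold log2. rewrite !ln_divp by lra. rewrite ln_mult, ln_Rinv by lra. field. lra.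
  - assert (v = 0) by lra. subst v.
    destruct (Rlt_dec 0 (u / (u + 0))) as [_|N]; [|exfalso; apply N; apply Rdiv_lt_0_compat; lra].
    destruct (Rlt_dec 0 (0 / (u + 0))) as [N|_]. { unfold Rdiv in N. lra. }
    rewrite Rplus_0_r. replace (u / u) with 1 by (field; lra).
    unfold log2. rewrite ln_1. rewrite ln_divp by lra. rewrite ln_mult, ln_Rinv by lra. field. lra.
  - assert (u = 0) by lra. subst u.
    destruct (Rlt_dec 0 (v / (0 + v))) as [_|N]; [|exfalso; apply N; apply Rdiv_lt_0_compat; lra].
    destruct (Rlt_dec 0 (0 / (0 + v))) as [N|_]. { unfold Rdiv in N. lra. }
    rewrite Rplus_0_l. replace (v / v) with 1 by (field; lra).
    unfold log2. rewrite ln_1. rewrite ln_divp by lra. rewrite ln_mult, ln_Rinv by lra. field. lra.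
  - lra.
Qed.

Lemma Fterm00 r : Fterm r 0 0 = 0.
Proof. unfold Fterm. destruct (Rlt_dec 0 0); [lra|]. ring. Qed.
Lemma Cterm00 : Cterm 0 0 = 0.
Proof. unfold Cterm. destruct (Rlt_dec 0 0); [lra|]. ring. Qed.

Lemma sumR_plus m f g : sumR m (fun y => f y + g y) = sumR m f + sumR m g.
Proof. unfold sumR. induction (seq 0 m); simpl; [ring|]. rewrite IHl. ring. Qed.
Lemma sumR_scal m c f : sumR m (fun y => c * f y) = c * sumR m f.
Proof. unfold sumR. induction (seq 0 m); simpl; [ring|]. rewrite IHl. ring. Qed.
Lemma sumR_le m f g : (forall y, (y < m)%nat -> f y <= g y) -> sumR m f <= sumR m g.
Proof.
  intro H. unfold sumR.
  assert (Hin : forall y, In y (seq 0 m) -> f y <= g y).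
  { intros y Hy. apply in_seq in Hy. apply H. lia. }
  induction (seq 0 m); simpl; [lra|].
  apply Rplus_le_compat. apply Hin; simpl; auto. apply IHl. intros; apply Hin; simpl; auto.
Qed.
Lemma sumR_ext m f g : (forall y, (y < m)%nat -> f y = g y) -> sumR m f = sumR m g.
Proof. intro H. apply Rle_antisym; apply sumR_le; intros; rewrite H; auto; lra. Qed.
Lemma sumR_eq_le m f g : (forall y, (y < m)%nat -> f y <= g y) -> sumR m f = sumR m g ->
  forall y, (y < m)%nat -> f y = g y.
Proof.
  intros H E. unfold sumR in E.
  assert (Hin : forall y, In y (seq 0 m) -> f y <= g y).
  { intros y Hy. apply in_seq in Hy. apply H. lia. }
  assert (G : forall y, In y (seq 0 m) -> f y = g y).
  { revert E Hin. induction (seq 0 m) as [|x l IH]; simpl; intros E Hin y Hy; [tauto|].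
    assert (Hl : fold_right Rplus 0 (map f l) <= fold_right Rplus 0 (map g l)).
    { clear IH E Hy. induction l; simpl; [lra|]. apply Rplus_le_compat. apply Hin; simpl; auto.
      apply IHl. intros; apply Hin; simpl; destruct H0; auto. }
    assert (Hx : f x <= g x) by (apply Hin; simpl; auto).
    destruct Hy as [<-|Hy]. lra.
    apply IH; auto; try lra. }
  intros y Hy. apply G. apply in_seq. lia.
Qed.
Lemma sumR_const0 m : sumR m (fun _ => 0) = 0.
Proof. unfold sumR. induction (seq 0 m); simpl; [ring|]. rewrite IHl. ring. Qed.

Lemma Fg_sum m W r : Fg m W r = sumR m (fun y => Fterm r (W false y) (W true y)).
Proof.
  unfold Fg, Fterm. unfold sumR at 1. simpl.
  rewrite Rplus_0_r. rewrite <- !sumR_scal, <- sumR_plus. reflexivity.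
Qed.

Lemma cap_sum m W : capacity m W = sumR m (fun y => Cterm (W false y) (W true y)).
Proof.
  unfold capacity, Cterm. unfold sumR at 1. simpl.
  rewrite Rplus_0_r. rewrite <- !sumR_scal, <- sumR_plus. reflexivity.
Qed.

Lemma ln_le' x y : 0 < x -> x <= y -> ln x <= ln y.
Proof. intros H1 H2. destruct H2. left; apply ln_increasing; auto. subst; lra. Qed.

Lemma mlog2_le x y : 0 < x -> x <= y -> - log2 y <= - log2 x.
Proof.
  intros. unfold log2. pose proof ln_lt_2. pose proof (ln_le' x y H H0).
  apply Ropp_le_contravar. unfold Rdiv. apply Rmult_le_compat_r; [left; apply Rinv_0_lt_compat; lra|auto].
Qed.

Lemma per_lower r u v : -1 < r -> 0 <= u -> 0 <= v ->
  (u + v) / 2 + (Rpower 2 (- r) - 1) * Cterm u v <= Fterm r u v.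
Proof.
  intros Hr Hu Hv. destruct (Req_dec (u + v) 0) as [E|E].
  - assert (u = 0) by lra. assert (v = 0) by lra. subst. rewrite Fterm00, Cterm00. lra.
  - rewrite Fterm_eq, Cterm_eq by lra.
    assert (Hp : 0 <= u / (u + v) <= 1).
    { split. apply Rdiv_le_0_compat; lra. apply (Rmult_le_reg_r (u + v)); [lra|]. field_simplify; lra. }
    pose proof (chord r _ Hr Hp).
    assert (0 <= (u + v) / 2) by lra.
    replace ((u + v) / 2 + (Rpower 2 (- r) - 1) * ((u + v) / 2 * (1 - hb (u / (u + v)))))
      with ((u + v) / 2 * (1 + (Rpower 2 (- r) - 1) * (1 - hb (u / (u + v))))) by ring.
    apply Rmult_le_compat_l; auto.
Qed.

Lemma per_upper r eps u v : -1 < r -> 0 < eps < / 2 -> 0 <= u -> 0 <= v ->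
  Fterm r u v <= (u + v) / 2 * (Fbsc r eps + mu r eps * hb eps) - mu r eps * ((u + v) / 2) + mu r eps * Cterm u v.
Proof.
  intros Hr He Hu Hv. destruct (Req_dec (u + v) 0) as [E|E].
  - assert (u = 0) by lra. assert (v = 0) by lra. subst. rewrite Fterm00, Cterm00. lra.
  - rewrite Fterm_eq, Cterm_eq by lra.
    assert (Hp : 0 <= u / (u + v) <= 1).
    { split. apply Rdiv_le_0_compat; lra. apply (Rmult_le_reg_r (u + v)); [lra|]. field_simplify; lra. }
    pose proof (tangent_p r eps _ Hr He Hp).
    assert (0 <= (u + v) / 2) by lra.
    replace ((u + v) / 2 * (Fbsc r eps + mu r eps * hb eps) - mu r eps * ((u + v) / 2) +
        mu r eps * ((u + v) / 2 * (1 - hb (u / (u + v)))))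
      with ((u + v) / 2 * (Fbsc r eps + mu r eps * hb eps - mu r eps * hb (u / (u + v)))) by ring.
    apply Rmult_le_compat_l; auto. lra.
Qed.

Lemma per_C u v : 0 <= u -> 0 <= v -> 0 <= Cterm u v <= (u + v) / 2.
Proof.
  intros Hu Hv. destruct (Req_dec (u + v) 0) as [E|E].
  - assert (u = 0) by lra. assert (v = 0) by lra. subst. rewrite Cterm00. lra.
  - rewrite Cterm_eq by lra.
    assert (Hp : 0 <= u / (u + v) <= 1).
    { split. apply Rdiv_le_0_compat; lra. apply (Rmult_le_reg_r (u + v)); [lra|]. field_simplify; lra. }
    pose proof (hb_ge0 _ Hp). pose proof (hb_le1 _ Hp). split; nra.
Qed.

Lemma Rpow2_pos r : 0 < Rpower 2 r.
Proof. apply exp_pos. Qed.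

Section Main.
End Main.

Lemma bounds_F m W r eps : is_BIMS m W -> -1 < r -> 0 <= eps <= / 2 -> hb eps = 1 - capacity m W ->
  Fbec r (capacity m W) <= Fg m W r /\ Fg m W r <= Fbsc r eps.
Proof.
  intros [[Hnn Hsum] _] Hr He Hh.
  set (C := capacity m W).
  assert (HC : C = sumR m (fun y => Cterm (W false y) (W true y))) by apply cap_sum.
  assert (HF : Fg m W r = sumR m (fun y => Fterm r (W false y) (W true y))) by apply Fg_sum.
  assert (HT : sumR m (fun y => (W false y + W true y) / 2) = 1).
  { replace (fun y => (W false y + W true y) / 2) with (fun y => / 2 * (W false y + W true y))
      by (apply functional_extensionality; intro; field).
    rewrite sumR_scal, sumR_plus, !Hsum. field. }
  split.
  - unfold Fbec. rewrite HF. fold C. rewrite HC.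
    replace (1 + (Rpower 2 (- r) - 1) * sumR m (fun y => Cterm (W false y) (W true y)))
      with (sumR m (fun y => (W false y + W true y) / 2 + (Rpower 2 (- r) - 1) * Cterm (W false y) (W true y))).
    2:{ rewrite sumR_plus, sumR_scal, HT. reflexivity. }
    apply sumR_le. intros y _. apply per_lower; auto.
  - destruct (Req_dec eps 0) as [E0|E0].
    +
      subst eps. rewrite hb0 in Hh. fold C in Hh.
      assert (Heq := sumR_eq_le m (fun y => Cterm (W false y) (W true y)) (fun y => (W false y + W true y) / 2)).
      assert (Hall : forall y, (y < m)%nat -> Cterm (W false y) (W true y) = (W false y + W true y) / 2).
      { apply Heq. intros y _. apply per_C; auto. rewrite <- HC, HT. lra. }
      rewrite HF, Fbsc0 by auto. rewrite <- (Rmult_1_r (Rpower 2 (- r))), <- HT, <- sumR_scal.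
      apply sumR_le. intros y Hy. specialize (Hall y Hy).
      pose proof (Hnn false y). pose proof (Hnn true y).
      destruct (Req_dec (W false y + W true y) 0) as [Z|Z].
      * assert (W false y = 0) by lra. assert (W true y = 0) by lra. rewrite H1, H2, Fterm00. lra.
      * rewrite Fterm_eq by lra. rewrite Cterm_eq in Hall by lra.
        assert (Hp : 0 <= W false y / (W false y + W true y) <= 1).
        { split. apply Rdiv_le_0_compat; lra. apply (Rmult_le_reg_r (W false y + W true y)); [lra|]. field_simplify; lra. }
        assert (Hh0 : hb (W false y / (W false y + W true y)) = 0).
        { apply (Rmult_eq_reg_l ((W false y + W true y) / 2)); [|lra]. lra. }
        destruct (hb_eq0 _ Hp Hh0) as [P|P]; rewrite P; [rewrite Fbsc0 by auto|rewrite Fbsc1 by auto]; lra.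
    + destruct (Req_dec eps (/2)) as [E1|E1].
      * subst eps. rewrite hb_half in Hh. fold C in Hh.
        assert (Heq := sumR_eq_le m (fun y => 0) (fun y => Cterm (W false y) (W true y))).
        assert (Hall : forall y, (y < m)%nat -> 0 = Cterm (W false y) (W true y)).
        { apply Heq. intros y _. apply per_C; auto. rewrite <- HC, sumR_const0. lra. }
        rewrite HF, Fbsc_half by auto. rewrite <- HT.
        apply sumR_le. intros y Hy. specialize (Hall y Hy).
        pose proof (Hnn false y). pose proof (Hnn true y).
        destruct (Req_dec (W false y + W true y) 0) as [Z|Z].
        -- assert (W false y = 0) by lra. assert (W true y = 0) by lra. rewrite H1, H2, Fterm00. lra.
        -- rewrite Fterm_eq by lra. rewrite Cterm_eq in Hall by lra.
           assert (Hp : 0 <= W false y / (W false y + W true y) <= 1).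
           { split. apply Rdiv_le_0_compat; lra. apply (Rmult_le_reg_r (W false y + W true y)); [lra|]. field_simplify; lra. }
           assert (Hh1 : hb (W false y / (W false y + W true y)) = 1).
           { apply (Rmult_eq_reg_l ((W false y + W true y) / 2)); [|lra]. lra. }
           rewrite (hb_eq1 _ Hp Hh1), Fbsc_half by auto. lra.
      * assert (He' : 0 < eps < / 2) by lra.
        rewrite HF.
        apply Rle_trans with (sumR m (fun y => (W false y + W true y) / 2 * (Fbsc r eps + mu r eps * hb eps)
             - mu r eps * ((W false y + W true y) / 2) + mu r eps * Cterm (W false y) (W true y))).
        { apply sumR_le. intros y _. apply per_upper; auto. }
        unfold Rminus. rewrite !sumR_plus.
        replace (fun y => - (mu r eps * ((W false y + W true y) / 2))) with (fun y => (- mu r eps) * ((W false y + W true y) / 2))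
          by (apply functional_extensionality; intro; ring).
        replace (fun y => (W false y + W true y) / 2 * (Fbsc r eps + mu r eps * hb eps))
          with (fun y => (Fbsc r eps + mu r eps * hb eps) * ((W false y + W true y) / 2))
          by (apply functional_extensionality; intro; ring).
        rewrite !sumR_scal, HT, <- HC. fold C in Hh. rewrite Hh. lra.
Qed.

Lemma Rpower2m1 : Rpower 2 (Ropp 1) = / 2.
Proof. unfold Rpower. replace (Ropp 1 * ln 2) with (Ropp (ln 2)) by ring. rewrite exp_Ropp, exp_ln; lra. Qed.

Lemma rpow_half x : 0 <= x -> rpow x (/ (1 + 1)) = sqrt x.
Proof.
  intro H. replace (/ (1 + 1)) with (/ 2) by field. destruct H as [H| <-].
  - unfold rpow. destruct (Rlt_dec 0 x); [|lra]. apply Rpower_sqrt; auto.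
  - rewrite rpow0, sqrt_0. auto.
Qed.

Lemma Fbsc_1 eps : 0 <= eps <= 1 -> Fbsc 1 eps = / 2 * (sqrt eps + sqrt (1 - eps)) ^ 2.
Proof.
  intro H. unfold Fbsc. rewrite Rpower2m1, !rpow_half by lra.
  replace (1 + 1) with (INR 2) by (simpl; ring). rewrite Rpower_pow; auto.
  destruct (Req_dec eps 1) as [->|N].
  - rewrite sqrt_1. pose proof (sqrt_pos (1 - 1)). lra.
  - pose proof (sqrt_pos eps). assert (0 < sqrt (1 - eps)) by (apply sqrt_lt_R0; lra). lra.
Qed.

Lemma Fbec_1 C : Fbec 1 C = (1 + (1 - C)) / 2.
Proof. unfold Fbec. rewrite Rpower2m1. field. Qed.

Lemma part1 m W rho eps :
     is_BIMS m W -> -1 < rho ->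
     0 <= eps <= / 2 -> hb eps = 1 - capacity m W ->
     - log2 (Fbsc rho eps) <= E0 m W rho /\
     E0 m W rho <= - log2 (Fbec rho (capacity m W)).
Proof.
  intros HB Hr He Hh. destruct (bounds_F m W rho eps HB Hr He Hh) as [L U].
  pose proof (hb_ge0 eps ltac:(lra)). pose proof (hb_le1 eps ltac:(lra)).
  assert (Hpos : 0 < Fbec rho (capacity m W)).
  { unfold Fbec. pose proof (Rpow2_pos (- rho)).
    replace (1 + (Rpower 2 (- rho) - 1) * capacity m W) with ((1 - capacity m W) + capacity m W * Rpower 2 (- rho)) by ring.
    destruct (Req_dec (capacity m W) 0) as [Z|Z]. rewrite Z; lra.
    assert (0 < capacity m W) by lra. nra. }
  unfold E0. split.
  - apply mlog2_le; lra.
  - apply mlog2_le; lra.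
Qed.

Lemma hb_inj x y : 0 <= x <= / 2 -> 0 <= y <= / 2 -> hb x = hb y -> x = y.
Proof.
  intros Hx Hy E. destruct (Rtotal_order x y) as [L|[L|L]]; auto.
  - pose proof (hb_strict x y ltac:(lra) ltac:(lra)). lra.
  - pose proof (hb_strict y x ltac:(lra) ltac:(lra)). lra.
Qed.

Lemma Fterm_u0 r u : -1 < r -> 0 <= u -> Fterm r u 0 = u / 2 * Rpower 2 (- r).
Proof.
  intros Hr Hu. destruct (Req_dec u 0) as [->|N]. rewrite Fterm00. field.
  rewrite Fterm_eq by lra. rewrite Rplus_0_r. replace (u / u) with 1 by (field; lra). rewrite Fbsc1; auto.
Qed.
Lemma Fterm_0v r v : -1 < r -> 0 <= v -> Fterm r 0 v = v / 2 * Rpower 2 (- r).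
Proof.
  intros Hr Hv. destruct (Req_dec v 0) as [->|N]. rewrite Fterm00. field.
  rewrite Fterm_eq by lra. rewrite Rplus_0_l. replace (0 / v) with 0 by (field; lra). rewrite Fbsc0; auto.
Qed.
Lemma Fterm_uu r u : -1 < r -> 0 <= u -> Fterm r u u = u.
Proof.
  intros Hr Hu. destruct (Req_dec u 0) as [->|N]. rewrite Fterm00. auto.
  rewrite Fterm_eq by lra. replace (u / (u + u)) with (/ 2) by (field; lra). rewrite Fbsc_half; auto. field.
Qed.
Lemma Cterm_u0 u : 0 <= u -> Cterm u 0 = u / 2.
Proof.
  intros Hu. destruct (Req_dec u 0) as [->|N]. rewrite Cterm00. field.
  rewrite Cterm_eq by lra. rewrite Rplus_0_r. replace (u / u) with 1 by (field; lra). rewrite hb1. ring.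
Qed.
Lemma Cterm_0v v : 0 <= v -> Cterm 0 v = v / 2.
Proof.
  intros Hv. destruct (Req_dec v 0) as [->|N]. rewrite Cterm00. field.
  rewrite Cterm_eq by lra. rewrite Rplus_0_l. replace (0 / v) with 0 by (field; lra). rewrite hb0. ring.
Qed.
Lemma Cterm_uu u : 0 <= u -> Cterm u u = 0.
Proof.
  intros Hu. destruct (Req_dec u 0) as [->|N]. rewrite Cterm00. auto.
  rewrite Cterm_eq by lra. replace (u / (u + u)) with (/ 2) by (field; lra). rewrite hb_half. ring.
Qed.

Lemma part2 m W eps :
     is_BIMS m W ->
     0 <= eps <= / 2 -> hb eps = 1 - capacity m W ->
     - log2 (/ 2 * (sqrt eps + sqrt (1 - eps)) ^ 2) <= E0 m W 1 /\
     E0 m W 1 <= - log2 ((1 + (1 - capacity m W)) / 2).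
Proof.
  intros HB He Hh. destruct (part1 m W 1 eps HB ltac:(lra) He Hh) as [L U].
  rewrite Fbsc_1 in L by lra. rewrite Fbec_1 in U. auto.
Qed.

Lemma part3 p eps :
     0 <= p <= 1 ->
     0 <= eps <= / 2 -> hb eps = 1 - capacity 2 (bsc p) ->
     E0 2 (bsc p) 1 = - log2 (/ 2 * (sqrt eps + sqrt (1 - eps)) ^ 2).
Proof.
  intros Hp He Hh. rewrite <- Fbsc_1 by lra.
  rewrite cap_sum in Hh. unfold E0. rewrite Fg_sum. unfold sumR in *. simpl in *.
  rewrite !Fterm_eq, !Cterm_eq in * by lra.
  replace (1 - p + p) with 1 in * by ring. replace (p + (1 - p)) with 1 in * by ring.
  replace ((1 - p) / 1) with (1 - p) in * by field. replace (p / 1) with p in * by field.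
  rewrite hb_sym in Hh. rewrite Fbsc_sym.
  assert (Hh' : hb eps = hb p) by lra.
  f_equal. f_equal.
  replace (1 / 2 * Fbsc 1 p + (1 / 2 * Fbsc 1 p + 0)) with (Fbsc 1 p) by field.
  destruct (Rle_or_lt p (/2)) as [L|L].
  - rewrite (hb_inj eps p) by lra. reflexivity.
  - rewrite <- (hb_sym p) in Hh'. rewrite (hb_inj eps (1 - p)) by lra. rewrite Fbsc_sym. reflexivity.
Qed.

Lemma part4 e :
     0 <= e <= 1 ->
     E0 3 (bec e) 1 = - log2 ((1 + (1 - capacity 3 (bec e))) / 2).
Proof.
  intros He. rewrite cap_sum. unfold E0. rewrite Fg_sum. unfold sumR. simpl.
  rewrite Fterm_u0, Fterm_0v, Fterm_uu, Cterm_u0, Cterm_0v, Cterm_uu by lra.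
  rewrite Rpower2m1. f_equal. f_equal. field.
Qed.

Theorem mainTheorem6 :
  (* general bounds on E0 *)
  (forall (m : nat) (W : bool -> nat -> R) (rho eps : R),
     is_BIMS m W -> -1 < rho ->
     0 <= eps <= / 2 -> hb eps = 1 - capacity m W ->
     - log2 (Fbsc rho eps) <= E0 m W rho /\
     E0 m W rho <= - log2 (Fbec rho (capacity m W))) /\
  (* cutoff rate bounds *)
  (forall (m : nat) (W : bool -> nat -> R) (eps : R),
     is_BIMS m W ->
     0 <= eps <= / 2 -> hb eps = 1 - capacity m W ->
     - log2 (/ 2 * (sqrt eps + sqrt (1 - eps)) ^ 2) <= E0 m W 1 /\
     E0 m W 1 <= - log2 ((1 + (1 - capacity m W)) / 2)) /\
  (* equality on the left for the BSC *)
  (forall (p eps : R),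
     0 <= p <= 1 ->
     0 <= eps <= / 2 -> hb eps = 1 - capacity 2 (bsc p) ->
     E0 2 (bsc p) 1 = - log2 (/ 2 * (sqrt eps + sqrt (1 - eps)) ^ 2)) /\
  (* equality on the right for the BEC *)
  (forall e : R,
     0 <= e <= 1 ->
     E0 3 (bec e) 1 = - log2 ((1 + (1 - capacity 3 (bec e))) / 2)).
Proof.
  split; [exact part1|]. split; [exact part2|]. split; [exact part3|exact part4].
Qed.
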